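(* Let $k$ be a commutative ring, and let $A$ and $B$ be Frobenius algebras over $k$ with Frobenius coordinates $(\phi,x_i,y_i)$ and $(\psi,z_j,w_j)$ respectively. Suppose $B$ is a subalgebra of $A$, $A_B$ is projective, and the Nakayama automorphism $\eta_A$ of $A$ satisfies $\eta_A(B)=B$. Then $A/B$ is a $\beta$-Frobenius extension with $\beta=\eta_B\circ\eta_A^{-1}|_B$ (where $\eta_B$ is the Nakayama automorphism of $B$), and a $\beta$-Frobenius homomorphism is given by $F(a)=\sum_j\phi(az_j)w_j$ for $a\in A$; i.e. $a\mapsto F(a\,\cdot)$ is a $B$-$A$-bimodule isomorphism $A\to{}_\beta\mathrm{Hom}_B(A_B,B_B)$.
   Context: Frobenius coordinates $(\phi,x_i,y_i)$ for a $k$-algebra $A$ (finitely generated projective over $k$): $\phi\in\mathrm{Hom}_k(A,k)$ and finitely many $x_i,y_i\in A$ with $\sum_ix_i\phi(y_ia)=a=\sum_i\phi(ax_i)y_i$ for all $a\in A$. The Nakayama automorphism $\eta_A$ (relative to $\phi$) is defined by $\phi(\eta_A(a)x)=\phi(xa)$ for all $a,x\in A$; similarly $\eta_B$ relative to $\psi$. For an automorphism $\beta$ of $B$, $A/B$ is a $\beta$-Frobenius extension if $A_B$ is finitely generated projective and $A\cong{}_\beta\mathrm{Hom}_B(A_B,B_B)$ as $B$-$A$-bimodules, where $(b\cdot\chi\cdot a)(x)=\beta(b)\chi(ax)$. *)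

(* Defs.v *)
From HB Require Import structures.
From mathcomp Require Import all_boot all_order all_algebra.
Set Implicit Arguments. Unset Strict Implicit. Unset Printing Implicit Defensive.
Import GRing.Theory.
Local Open Scope ring_scope.

Section FrobDefs.
Variable k : comNzRingType.

Definition klinear_form (A : algType k) (phi : A -> k) : Prop :=
  (forall a a', phi (a + a') = phi a + phi a') /\
  (forall (c : k) a, phi (c *: a) = c * phi a).

Definition frobenius_coords (A : algType k) (phi : A -> k) (n : nat)
    (x y : 'I_n -> A) : Prop :=
  klinear_form phi /\
  (forall a : A, \sum_(i < n) phi (y i * a) *: x i = a) /\
  (forall a : A, \sum_(i < n) phi (a * x i) *: y i = a).

Definition nakayama (A : algType k) (phi : A -> k) (eta : A -> A) : Prop :=
  forall a x : A, phi (eta a * x) = phi (x * a).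

Variables (A B : algType k) (iota : {lrmorphism B -> A}).

(* Elements of Hom_B(A_B, B_B): additive right B-linear maps, where A is a
   right B-module via iota. *)
Definition right_Blinear (f : A -> B) : Prop :=
  (forall a a', f (a + a') = f a + f a') /\
  (forall a b, f (a * iota b) = f a * b).

(* A_B is projective (dual basis characterization, arbitrary index set). *)
Definition right_projective : Prop :=
  exists (I : eqType) (e : I -> A) (f : I -> A -> B),
    (forall i, right_Blinear (f i)) /\
    (forall a, exists s : seq I,
        (forall i, i \notin s -> f i a = 0) /\
        a = \sum_(i <- s) e i * iota (f i a)).

Definition right_fg_projective : Prop :=
  exists (n : nat) (e : 'I_n -> A) (f : 'I_n -> A -> B),
    (forall i, right_Blinear (f i)) /\
    (forall a, a = \sum_(i < n) e i * iota (f i a)).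

Definition kalg_automorphism (beta : B -> B) : Prop :=
  bijective beta /\
  (forall b b', beta (b + b') = beta b + beta b') /\
  (forall b b', beta (b * b') = beta b * beta b') /\
  beta 1 = 1 /\
  (forall (c : k) b, beta (c *: b) = c *: beta b).

(* Phi : A -> (A -> B) is a B-A-bimodule isomorphism
   A ~= _beta Hom_B(A_B, B_B), where (b . chi . a)(x) = beta(b) chi(a x). *)
Definition bimod_iso (beta : B -> B) (Phi : A -> A -> B) : Prop :=
  (forall a, right_Blinear (Phi a)) /\
  (forall a a' x, Phi (a + a') x = Phi a x + Phi a' x) /\
  (forall b a a' x, Phi (iota b * a * a') x = beta b * Phi a (a' * x)) /\
  (forall a a', (forall x, Phi a x = Phi a' x) -> a = a') /\
  (forall chi : A -> B, right_Blinear chi -> exists a, forall x, chi x = Phi a x).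

Definition beta_frobenius_ext (beta : B -> B) : Prop :=
  kalg_automorphism beta /\ right_fg_projective /\
  exists Phi : A -> A -> B, bimod_iso beta Phi.

Definition beta_frobenius_hom (beta : B -> B) (F : A -> B) : Prop :=
  bimod_iso beta (fun a x => F (a * x)).

End FrobDefs.

(* Main.v *)
Require Import Defs.
From HB Require Import structures.
From mathcomp Require Import all_boot all_order all_algebra.
Import GRing.Theory.
Local Open Scope ring_scope.
Set Implicit Arguments. Unset Strict Implicit.

Section Gen.
Variables (k : comNzRingType) (A : algType k) (phi : A -> k) (n : nat) (x y : 'I_n -> A).
Hypothesis Hf : frobenius_coords phi x y.

Lemma phiD a a' : phi (a + a') = phi a + phi a'.
Proof. by case: Hf => [[H _] _]. Qed.
Lemma phiZ c a : phi (c *: a) = c * phi a.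
Proof. by case: Hf => [[_ H] _]. Qed.
Lemma phi0 : phi 0 = 0.
Proof. by rewrite -(scale0r (0:A)) phiZ mul0r. Qed.
Lemma phi_sum (I : Type) (r : seq I) (P : pred I) (F : I -> A) :
  phi (\sum_(i <- r | P i) F i) = \sum_(i <- r | P i) phi (F i).
Proof. exact: (big_morph phi phiD phi0). Qed.
Lemma nondegL X Y : (forall v, phi (X * v) = phi (Y * v)) -> X = Y.
Proof.
move=> H; case: Hf => _ [_ H2]; rewrite -(H2 X) -(H2 Y).
by apply: eq_bigr => i _; rewrite H.
Qed.
Lemma nondegR X Y : (forall v, phi (v * X) = phi (v * Y)) -> X = Y.
Proof.
move=> H; case: Hf => _ [H1 _]; rewrite -(H1 X) -(H1 Y).
by apply: eq_bigr => i _; rewrite H.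
Qed.

Variable eta : A -> A.
Hypothesis Hn : nakayama phi eta.
Lemma etaD a a' : eta (a + a') = eta a + eta a'.
Proof. by apply: nondegL => v; rewrite (Hn (a + a')) mulrDl mulrDr !phiD (Hn a) (Hn a'). Qed.
Lemma etaM a a' : eta (a * a') = eta a * eta a'.
Proof. apply: nondegL => v; rewrite (Hn (a * a')) -mulrA (Hn a) -mulrA (Hn a') mulrA; done. Qed.
Lemma eta1 : eta 1 = 1.
Proof. by apply: nondegL => v; rewrite (Hn 1) mul1r mulr1. Qed.
Lemma etaZ c a : eta (c *: a) = c *: eta a.
Proof. by apply: nondegL => v; rewrite (Hn (c *: a)) -scalerAl -scalerAr !phiZ (Hn a). Qed.
Lemma eta_inj : injective eta.
Proof. by move=> a a' H; apply: nondegR => v; rewrite -(Hn a) -(Hn a') H. Qed.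
End Gen.
Section Proj.
Variables (k : comNzRingType) (A B : algType k) (iota : {lrmorphism B -> A}).

Lemma rbl0 f : right_Blinear iota f -> f 0 = 0.
Proof.
case=> HD _; have := HD 0 0; rewrite addr0.
by move=> /(congr1 (fun t => t - f 0)); rewrite addrK subrr.
Qed.
Lemma rblN f a : right_Blinear iota f -> f (- a) = - f a.
Proof.
move=> Hf; apply/eqP; rewrite -subr_eq0 opprK addrC; case: (Hf) => HD _.
by rewrite -HD subrr rbl0.
Qed.
Lemma rblB f a b : right_Blinear iota f -> f (a - b) = f a - f b.
Proof. by move=> Hf; case: (Hf) => HD _; rewrite HD rblN. Qed.
Lemma rblZ f c a : right_Blinear iota f -> f (c *: a) = c *: f a.
Proof.
case=> _ HM; rewrite -mulr_algr -(rmorph_alg iota) HM.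
by rewrite mulr_algr.
Qed.
Lemma rbl_sum f (I : Type) (r : seq I) (F : I -> A) : right_Blinear iota f ->
  f (\sum_(i <- r) F i) = \sum_(i <- r) f (F i).
Proof.
move=> Hf; case: (Hf) => HD _; elim: r => [|i r IH]; first by rewrite !big_nil rbl0.
by rewrite !big_cons HD IH.
Qed.

Definition T := (A * (A -> B))%type.
Definition Pi (L : seq T) (a : A) := \sum_(p <- L) p.1 * iota (p.2 a).
Definition good (L : seq T) := foldr (fun p P => right_Blinear iota p.2 /\ P) True L.

Lemma good_cat L1 L2 : good L1 -> good L2 -> good (L1 ++ L2).
Proof. by elim: L1 => //= p L IH [H1 H2] H3; split => //; apply: IH. Qed.

Lemma good_nth L i : good L -> right_Blinear iota (nth (0, fun _ => 0) L i).2.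
Proof.
elim: L i => [|p L IH] [|i] /=; try by move=> _; split => *; rewrite ?addr0 ?mul0r.
- by case.
- by case=> _ H; apply: IH.
Qed.

Lemma PiD L a a' : good L -> Pi L (a + a') = Pi L a + Pi L a'.
Proof.
rewrite /Pi; elim: L => [|p L IH] /=; first by rewrite !big_nil addr0.
case=> [[HD _] H]; rewrite !big_cons IH // HD rmorphD mulrDr.
by rewrite -!addrA; congr (_ + _); rewrite addrCA.
Qed.
Lemma PiM L a b : good L -> Pi L (a * iota b) = Pi L a * iota b.
Proof.
rewrite /Pi; elim: L => [|p L IH] /=; first by rewrite !big_nil mul0r.
case=> [[_ HM] H]; rewrite !big_cons IH // HM rmorphM mulrDl mulrA.
by [].
Qed.
Lemma Pi_good L : good L -> (forall a a', Pi L (a + a') = Pi L a + Pi L a') /\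
  (forall a b, Pi L (a * iota b) = Pi L a * iota b).
Proof. by move=> H; split => *; [apply: PiD | apply: PiM]. Qed.

Lemma Pi_cat L1 L2 a : Pi (L1 ++ L2) a = Pi L1 a + Pi L2 a.
Proof. by rewrite /Pi big_cat. Qed.

Definition negcomp (h : A -> A) (L : seq T) : seq T :=
  map (fun p => (- p.1, fun a => p.2 (h a))) L.

Lemma Pi_negcomp h L a : Pi (negcomp h L) a = - Pi L (h a).
Proof. by rewrite /Pi /negcomp big_map -sumrN; apply: eq_bigr => p _; rewrite mulNr. Qed.

Lemma good_negcomp h L : (forall a a', h (a + a') = h a + h a') ->
  (forall a b, h (a * iota b) = h a * iota b) -> good L -> good (negcomp h L).
Proof.
move=> hD hM; elim: L => //= p L IH [[HD HM] H]; split; last exact: IH.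
by split => *; rewrite ?hD ?hM ?HD ?HM.
Qed.

Definition Ls (I : Type) (e : I -> A) (f : I -> A -> B) (s : seq I) : seq T :=
  map (fun i => (e i, f i)) s.

Lemma Pi_Ls I e f s a : Pi (@Ls I e f s) a = \sum_(i <- s) e i * iota (f i a).
Proof. by rewrite /Pi big_map. Qed.

Lemma good_Ls I e f s : (forall i, right_Blinear iota (f i)) -> good (@Ls I e f s).
Proof. by move=> H; elim: s => //= i s IH; split. Qed.

Lemma fg_proj (phi : A -> k) (n : nat) (x y : 'I_n -> A) :
  frobenius_coords phi x y -> right_projective iota -> right_fg_projective iota.
Proof.
move=> [_ [Hx _]] [I [e [f [Hf Hs]]]].
have step : forall t, exists L, good L /\ forall i : 'I_n, (i < t)%N -> Pi L (x i) = x i.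
  elim=> [|t [L [gL HL]]]; first by exists [::].
  case: (ltnP t n) => [tn|nt]; last first.
    exists L; split => // i it; apply: HL.
    by apply: (leq_trans (ltn_ord i)).
  pose i0 := Ordinal tn.
  pose r := x i0 - Pi L (x i0).
  have [s [_ Hr]] := Hs r.
  have [PD PM] := Pi_good gL.
  exists (L ++ Ls e f s ++ negcomp (Pi L) (Ls e f s)); split.
    apply: good_cat => //; apply: good_cat; first exact: good_Ls.
    by apply: good_negcomp => //; apply: good_Ls.
  move=> i; rewrite ltnS leq_eqVlt => /orP [/eqP it|it].
    have -> : i = i0 by apply: val_inj.
    rewrite !Pi_cat Pi_negcomp !Pi_Ls.
    have -> : \sum_(i <- s) e i * iota (f i (x i0)) - \sum_(i <- s) e i * iota (f i (Pi L (x i0)))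
       = \sum_(i <- s) e i * iota (f i r).
      rewrite -sumrB; apply: eq_bigr => j _.
      by rewrite /r rblB // rmorphB mulrBr.
    by rewrite -Hr /r addrA addrAC subrr add0r.
  rewrite !Pi_cat Pi_negcomp HL //.
  by rewrite addrA addrK.
have [L [gL HL]] := step n.
have [PD PM] := Pi_good gL.
have P0 : Pi L 0 = 0.
  have := PD 0 0; rewrite addr0.
  by move=> /(congr1 (fun t => t - Pi L 0)); rewrite addrK subrr.
have PZ : forall c a, Pi L (c *: a) = c *: Pi L a.
  by move=> c a; rewrite -mulr_algr -(rmorph_alg iota) PM rmorph_alg mulr_algr.
have Pid : forall a, Pi L a = a.
  move=> a; rewrite -{1}(Hx a) (big_morph (Pi L) PD P0).
  by rewrite -{2}(Hx a); apply: eq_bigr => i _; rewrite PZ HL.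
exists (size L), (fun i => (nth (0, fun _ => 0) L i).1),
  (fun i => (nth (0, fun _ => 0) L i).2); split.
  by move=> i; apply: good_nth.
move=> a; rewrite -{1}(Pid a) /Pi (big_nth (0, fun _ => 0)) big_mkord.
by [].
Qed.
End Proj.
Unset Implicit Arguments. Set Strict Implicit.
Theorem mainTheorem13 (k : comNzRingType) (A B : algType k)
    (iota : {lrmorphism B -> A})
    (phi : A -> k) (n : nat) (x y : 'I_n -> A)
    (psi : B -> k) (m : nat) (z w : 'I_m -> B)
    (etaA : A -> A) (etaB : B -> B) :
  frobenius_coords phi x y ->
  frobenius_coords psi z w ->
  injective iota ->
  right_projective iota ->
  nakayama phi etaA ->
  nakayama psi etaB ->
  (* eta_A(B) = B *)
  (forall b : B, exists b' : B, etaA (iota b) = iota b') ->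
  (forall b' : B, exists b : B, etaA (iota b) = iota b') ->
  (* gamma = eta_A^{-1} restricted to B *)
  forall gamma : B -> B, (forall b, etaA (iota (gamma b)) = iota b) ->
  beta_frobenius_ext iota (etaB \o gamma) /\
  beta_frobenius_hom iota (etaB \o gamma)
    (fun a : A => \sum_(j < m) phi (a * iota (z j)) *: w j).
Proof.
move=> HA HB Hi Hproj HnA HnB H7 _ gamma Hg.
set F := fun a : A => _.
have HB' := HB; case: HB' => _ [Bw Bz].
have L1 : forall a v, psi (F a * v) = phi (a * iota v).
  move=> a v; rewrite /F mulr_suml (phi_sum HB).
  rewrite -{2}(Bw v) linear_sum mulr_sumr (phi_sum HA).
  apply: eq_bigr => j _; rewrite -scalerAl (phiZ HB) linearZ /= -scalerAr (phiZ HA).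
  by rewrite mulrC.
have FD : forall a a', F (a + a') = F a + F a'.
  by move=> a a'; rewrite /F -big_split; apply: eq_bigr => j _; rewrite mulrDl (phiD HA) scalerDl.
have FB : forall a b, F (a * iota b) = F a * b.
  move=> a b; apply: (nondegL HB) => v.
  by rewrite L1 -(mulrA (F a)) L1 rmorphM mulrA.
have Fl : forall a b, F (iota b * a) = (etaB \o gamma) b * F a.
  move=> a b; apply: (nondegL HB) => v.
  rewrite L1 /= -(mulrA (etaB (gamma b))) (HnB (gamma b)) -(mulrA (F a)) L1 rmorphM mulrA -(HnA (iota (gamma b))) Hg.
  by rewrite mulrA.
have iso : bimod_iso iota (etaB \o gamma) (fun a x0 => F (a * x0)).
  split.
    by move=> a; split => [a1 a2|a1 b]; rewrite ?mulrDr ?FD // mulrA FB.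
  split; first by move=> a a' x0; rewrite mulrDl FD.
  split; first by move=> b a a' x0; rewrite -!mulrA Fl.
  split.
    move=> a a' H; apply: (nondegL HA) => v.
    by rewrite -[a * v]mulr1 -[a' * v]mulr1 -(rmorph1 iota) -!L1 H.
  move=> chi [cD cM].
  have c0 : chi 0 = 0 by apply: (rbl0 (conj cD cM)).
  have cZ : forall c a, chi (c *: a) = c *: chi a.
    by move=> c a; apply: (rblZ _ _ (conj cD cM)).
  exists (\sum_(i < n) psi (chi (x i)) *: y i) => x0.
  apply: (nondegL HB) => v.
  rewrite L1 -cM -mulrA.
  case: (HA) => _ [Ax _].
  rewrite -{1}(Ax (x0 * iota v)) (big_morph chi cD c0) (phi_sum HB) mulr_suml (phi_sum HA).
  apply: eq_bigr => i _; rewrite cZ (phiZ HB) -scalerAl (phiZ HA).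
  by rewrite mulrC.
split; last exact: iso.
split; last by split; [exact: (fg_proj HA Hproj) | exists (fun a x0 => F (a * x0))].
have etaAinj := eta_inj HA HnA.
have gE : forall c c', etaA (iota c) = etaA (iota c') -> c = c'.
  by move=> c c' /etaAinj /Hi.
have ex : forall b, exists b', etaA (iota b) == iota b'.
  by move=> b; case: (H7 b) => b' e; exists b'; apply/eqP.
pose ginv b := xchoose (ex b).
have ginvP : forall b, etaA (iota b) = iota (ginv b).
  by move=> b; apply/eqP; exact: (xchooseP (ex b)).
pose etaBinv c := \sum_(j < m) psi (c * w j) *: z j.
have gbij : bijective gamma.
  exists ginv => b.
    by apply: Hi; rewrite -ginvP Hg.
  by apply: gE; rewrite Hg ginvP.
have ebij : bijective etaB.
  exists etaBinv => b.
    rewrite /etaBinv -{2}(Bw b); apply: eq_bigr => j _.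
    by rewrite (HnB b).
  apply: (nondegL HB) => v.
  rewrite (HnB (etaBinv b)) /etaBinv mulr_sumr (phi_sum HB).
  rewrite -{2}(Bz v) mulr_sumr (phi_sum HB).
  apply: eq_bigr => j _; rewrite -!scalerAr !(phiZ HB).
  by rewrite mulrC.
have gD : forall b b', gamma (b + b') = gamma b + gamma b'.
  by move=> b b'; apply: gE; rewrite rmorphD (etaD HA HnA) !Hg rmorphD.
have gM : forall b b', gamma (b * b') = gamma b * gamma b'.
  by move=> b b'; apply: gE; rewrite rmorphM (etaM HA HnA) !Hg rmorphM.
have g1 : gamma 1 = 1.
  by apply: gE; rewrite Hg rmorph1 (eta1 HA HnA).
have gZ : forall c b, gamma (c *: b) = c *: gamma b.
  by move=> c b; apply: gE; rewrite linearZ /= (etaZ HA HnA) !Hg linearZ.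
split; first exact: bij_comp.
split; first by move=> b b' /=; rewrite gD (etaD HB HnB).
split; first by move=> b b' /=; rewrite gM (etaM HB HnB).
split; first by rewrite /= g1 (eta1 HB HnB).
by move=> c b /=; rewrite gZ (etaZ HB HnB).
Qed.
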